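(* Let $M\ge 1$ users be located at $\boldsymbol\psi_m=(x_m,y_m,0)$, $1\le m\le M$, with $-\frac{D_{\rm L}}{2}\le x_m\le \frac{D_{\rm L}}{2}$ and $-\frac{D_{\rm W}}{2}\le y_m\le \frac{D_{\rm W}}{2}$, and let a single antenna be placed at $(x,0,d)$ with $d>0$. For transmit powers $P_m\ge 0$ define $$R_m^{\rm OMA}=\frac{1}{M}\log\left(1+\frac{\eta P_m}{\sigma^2\big((x-x_m)^2+y_m^2+d^2\big)}\right),$$ where $\eta>0$, $\sigma^2>0$. Consider the problem $$\max_{P_1,\dots,P_M\ge 0,\ x}\ \min\{R_1^{\rm OMA},\dots,R_M^{\rm OMA}\}\quad\text{s.t.}\quad \sum_{m=1}^M P_m\le P,\quad -\frac{D_{\rm L}}{2}\le x\le \frac{D_{\rm L}}{2},$$ with $P>0$. Then an optimal antenna location is $$x^*=\frac{1}{M}\sum_{m=1}^M x_m,$$ and the optimal transmit powers are $$P_m^*=\frac{\tau_{mx^*}}{\sum_{i=1}^M\tau_{ix^*}}P,\qquad 1\le m\le M,$$ where $\tau_{mx^*}=(x^*-x_m)^2+y_m^2+d^2$.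
   Context: This models a pinching-antenna system: a single pinching antenna activated at point $(x,0,d)$ on a waveguide at height $d$ above the centre line of a rectangular service area of sides $D_{\rm L}$ (along the waveguide) and $D_{\rm W}$; users are served by time-division multiple access over $M$ slots (hence the factor $1/M$). $\eta=\frac{c^2}{16\pi^2 f_c^2}$ with $c$ the speed of light and $f_c$ the carrier frequency; $\sigma^2$ is the noise power; $\log$ is the natural logarithm. *)

(* Defs.v *)
From mathcomp Require Import all_boot all_order all_algebra.
From mathcomp Require Import reals exp.
Set Implicit Arguments. Unset Strict Implicit. Unset Printing Implicit Defensive.
Import Order.TTheory GRing.Theory Num.Theory.
Local Open Scope ring_scope.

(* tau = (x - x_m)^2 + y_m^2 + d^2 : squared distance antenna (x,0,d) to user (x_m,y_m,0) *)
Definition tau {R : realType} (x xm ym d : R) : R := (x - xm) ^+ 2 + ym ^+ 2 + d ^+ 2.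

Definition rate_OMA {R : realType} (M : nat) (eta sigma2 Pm x xm ym d : R) : R :=
  M%:R^-1 * ln (1 + eta * Pm / (sigma2 * tau x xm ym d)).

Definition min_seq {R : realType} (s : seq R) : R := foldr Num.min (head 0 s) s.

Definition min_rate {R : realType} (M : nat) (eta sigma2 d : R) (xs ys : 'I_M -> R)
  (Ps : 'I_M -> R) (x : R) : R :=
  min_seq [seq rate_OMA M eta sigma2 (Ps m) x (xs m) (ys m) d | m <- enum 'I_M].

(* Main.v *)
Require Import Defs.
From mathcomp Require Import all_boot all_order all_algebra.
From mathcomp Require Import reals exp.
From mathcomp Require Import ring lra.
Import Order.TTheory GRing.Theory Num.Theory.
Local Open Scope ring_scope.

Lemma min_seq_le (R : realType) (s : seq R) v : v \in s -> min_seq s <= v.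
Proof.
rewrite /min_seq; elim: s (head 0 s) => [|a s IH] h //=.
rewrite in_cons => /orP [/eqP ->|Hv]; first by rewrite ge_min lexx.
by rewrite ge_min (IH h Hv) orbT.
Qed.

Lemma min_seq_ge (R : realType) (s : seq R) v :
  (forall y, y \in s -> v <= y) -> v <= head 0 s -> v <= min_seq s.
Proof.
rewrite /min_seq; elim: s (head 0 s) => [|a s IH] h //= H Hh.
rewrite le_min H ?mem_head //= IH // => y Hy.
by apply: H; rewrite in_cons Hy orbT.
Qed.

Lemma tau_gt0 {R : realType} (x xm ym d : R) : 0 < d -> 0 < tau x xm ym d.
Proof.
move=> hd; rewrite /tau.
have h1 : 0 <= (x - xm) ^+ 2 by apply: sqr_ge0.
have h2 : 0 <= ym ^+ 2 by apply: sqr_ge0.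
have h3 : 0 < d ^+ 2 by apply: exprn_gt0.
lra.
Qed.

Theorem lemma1 (R : realType) (M : nat) (DL DW d eta sigma2 P : R)
    (xs ys : 'I_M -> R) :
  (0 < M)%N -> 0 < d -> 0 < eta -> 0 < sigma2 -> 0 < P ->
  (forall m, - (DL / 2) <= xs m <= DL / 2) ->
  (forall m, - (DW / 2) <= ys m <= DW / 2) ->
  let xstar := M%:R^-1 * \sum_(m < M) xs m in
  let Pstar := fun m : 'I_M =>
    tau xstar (xs m) (ys m) d / (\sum_(i < M) tau xstar (xs i) (ys i) d) * P in
  [/\ (forall m, 0 <= Pstar m), \sum_(m < M) Pstar m <= P,
      - (DL / 2) <= xstar <= DL / 2 &
      forall (Ps : 'I_M -> R) (x : R),
        (forall m, 0 <= Ps m) -> \sum_(m < M) Ps m <= P ->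
        - (DL / 2) <= x <= DL / 2 ->
        min_rate eta sigma2 d xs ys Ps x <= min_rate eta sigma2 d xs ys Pstar xstar].
Proof.
move=> HM hd heta hs hP hx hy xstar Pstar.
pose m0 : 'I_M := Ordinal HM.
have HMr : (0 : R) < M%:R by rewrite ltr0n.
have HMne : M%:R != 0 :> R by rewrite gt_eqF.
pose S x := \sum_(i < M) tau x (xs i) (ys i) d.
have Spos : forall x, 0 < S x.
  move=> x; rewrite /S (bigD1 m0) //=.
  have := tau_gt0 x (xs m0) (ys m0) d hd.
  have : 0 <= \sum_(i < M | i != m0) tau x (xs i) (ys i) d.
    by apply: sumr_ge0 => i _; apply/ltW/tau_gt0.
  lra.
have Smin : forall x, S xstar <= S x.
  move=> x.
  have E : S x = S xstar + \sum_(i < M) ((x - xstar) ^+ 2 + 2 * (x - xstar) * (xstar - xs i)).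
    rewrite /S -big_split /=; apply: eq_bigr => i _; rewrite /tau; ring.
  have sx : \sum_(i < M) xs i = M%:R * xstar.
    by rewrite /xstar mulrA mulfV // mul1r.
  rewrite E big_split /= sumr_const card_ord -mulr_sumr sumrB sumr_const card_ord sx.
  by rewrite [M%:R * xstar]mulr_natl subrr mulr0 addr0 lerDl mulrn_wge0 // sqr_ge0.
have SxN : S xstar != 0 by rewrite gt_eqF.
split.
- move=> m; rewrite /Pstar; apply: mulr_ge0; last exact: ltW.
  by apply: divr_ge0; apply: ltW; [apply: tau_gt0 | exact: (Spos xstar)].
- rewrite /Pstar -mulr_suml -mulr_suml -/(S xstar) mulfV // mul1r lexx //.
- have lo : \sum_(m < M) (- (DL / 2)) <= \sum_(m < M) xs m.
    by apply: ler_sum => i _; case/andP: (hx i).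
  have hi : \sum_(m < M) xs m <= \sum_(m < M) (DL / 2).
    by apply: ler_sum => i _; case/andP: (hx i).
  rewrite sumr_const card_ord in lo.
  rewrite sumr_const card_ord in hi.
  rewrite /xstar; apply/andP; split.
  + by rewrite ler_pdivlMl // mulrC mulr_natr.
  + by rewrite ler_pdivrMl // mulrC mulr_natr.
move=> Ps x hPs hsum _.
pose v := M%:R^-1 * ln (1 + eta * P / (sigma2 * S xstar)).
have [m Hm] : exists m, Ps m * S x <= P * tau x (xs m) (ys m) d.
  case: (boolP [exists m, Ps m * S x <= P * tau x (xs m) (ys m) d]).
    by move/existsP.
  move/existsPn => H; exfalso.
  have : P * S x < (\sum_(m < M) Ps m) * S x.
    rewrite /S mulr_sumr mulr_suml (bigD1 m0) //= [X in _ < X](bigD1 m0) //=.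
    apply: ltr_leD; first by rewrite ltNge H.
    by apply: ler_sum => i _; apply/ltW; rewrite ltNge H.
  have := Spos x.
  have : 0 <= (P - \sum_(m < M) Ps m) * S x by apply: mulr_ge0; [lra|exact/ltW/Spos].
  nra.
apply: (@le_trans _ _ (rate_OMA M eta sigma2 (Ps m) x (xs m) (ys m) d)).
  apply: min_seq_le; apply/mapP; exists m => //; exact: mem_enum.
apply: (@le_trans _ _ v).
  rewrite /rate_OMA /v ler_wpM2l ?invr_ge0 ?ler0n //.
  have ht := tau_gt0 x (xs m) (ys m) d hd.
  have hSx := Spos x; have hSs := Spos xstar.
  have key : eta * Ps m / (sigma2 * tau x (xs m) (ys m) d) <= eta * P / (sigma2 * S xstar).
    rewrite ler_pdivrMr ?mulr_gt0 //.
    rewrite mulrAC ler_pdivlMr ?mulr_gt0 //.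
    have h1 : Ps m * S xstar <= P * tau x (xs m) (ys m) d.
      apply: le_trans Hm; apply: ler_wpM2l => //.
    have : 0 <= eta * sigma2 * (P * tau x (xs m) (ys m) d - Ps m * S xstar).
      by apply: mulr_ge0; [apply: mulr_ge0; exact: ltW | lra].
    lra.
  have g1 : 0 <= eta * Ps m / (sigma2 * tau x (xs m) (ys m) d).
    by apply: divr_ge0; [apply: mulr_ge0 => //; exact: ltW | apply/ltW/mulr_gt0].
  rewrite ler_ln ?posrE; lra.
apply: min_seq_ge.
  move=> y /mapP [i _ ->]; rewrite /rate_OMA /v /Pstar -/(S xstar).
  have ht := tau_gt0 xstar (xs i) (ys i) d hd.
  have hSs := Spos xstar.
  have -> : eta * (tau xstar (xs i) (ys i) d / S xstar * P) / (sigma2 * tau xstar (xs i) (ys i) d) = eta * P / (sigma2 * S xstar).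
    by field; rewrite ?gt_eqF ?mulf_neq0 ?gt_eqF.
  by [].
case E: (enum 'I_M) => [|i s] /=.
  by move: (mem_enum predT m0); rewrite E.
rewrite /rate_OMA /v /Pstar -/(S xstar).
have ht := tau_gt0 xstar (xs i) (ys i) d hd.
have hSs := Spos xstar.
have -> : eta * (tau xstar (xs i) (ys i) d / S xstar * P) / (sigma2 * tau xstar (xs i) (ys i) d) = eta * P / (sigma2 * S xstar).
  by field; rewrite ?gt_eqF ?mulf_neq0 ?gt_eqF.
by [].
Qed.
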